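(* Let $n\geq 2$, let $\Gamma=\langle\mathbb{Z}^n,(0,-I_n)\rangle\subseteq\mathrm{Aff}(\mathbb{R}^n)$ with holonomy group $F=\{I_n,-I_n\}$, and let $\varphi=\xi_{(d,D)}\in\mathrm{Aut}(\Gamma)$ (so that $d\in(\tfrac12\mathbb{Z})^n$ and $D\in\mathrm{GL}_n(\mathbb{Z})$). Then $$R(\varphi)=\left(\frac12\sum_{A\in F}|\det(I_n-AD)|_\infty\right)+O(I_n-D,2d).$$
   Context: $\mathrm{Aff}(\mathbb{R}^n)=\mathbb{R}^n\rtimes\mathrm{GL}_n(\mathbb{R})$ with multiplication $(d_1,D_1)(d_2,D_2)=(d_1+D_1d_2,D_1D_2)$; $\mathbb{Z}^n$ denotes $\{(z,I_n)\mid z\in\mathbb{Z}^n\}$. For $(d,D)\in\mathrm{Aff}(\mathbb{R}^n)$, $\xi_{(d,D)}$ denotes $\gamma\mapsto(d,D)\gamma(d,D)^{-1}$; every automorphism of $\Gamma$ has this form, with $d\in(\frac12\mathbb{Z})^n$. $R(\varphi)$ is the number of classes of the relation $g\sim g'\iff\exists h\in\Gamma: g=hg'\varphi(h)^{-1}$. For an integer $x$, $|x|_\infty=|x|$ if $x\neq0$ and $\infty$ if $x=0$. For $B\in\mathbb{Z}^{n\times n}$, $b\in\mathbb{Z}^n$, $O(B,b)$ is the number of solutions $\bar x\in\mathbb{Z}_2^n$ of $\bar B\bar x=\bar b$ over $\mathbb{Z}_2$, bars denoting reduction mod $2$. *)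

(* Defs.v *)
From HB Require Import structures.
From mathcomp Require Import all_boot all_order all_algebra.
Set Implicit Arguments. Unset Strict Implicit. Unset Printing Implicit Defensive.
Import Order.TTheory GRing.Theory Num.Theory.
Local Open Scope ring_scope.

Definition aff (R : realFieldType) (n : nat) : Type := ('cV[R]_n * 'M[R]_n)%type.

Definition aff_mul (R : realFieldType) (n : nat) (g h : aff R n) : aff R n :=
  (g.1 + g.2 *m h.1, g.2 *m h.2).

Definition aff_inv (R : realFieldType) (n : nat) (g : aff R n) : aff R n :=
  (- (invmx g.2 *m g.1), invmx g.2).

Definition xi (R : realFieldType) (n : nat) (a : aff R n) (g : aff R n) : aff R n :=
  aff_mul (aff_mul a g) (aff_inv a).

(* Gamma = < Z^n, (0,-I_n) > = { (z, I_n), (z, -I_n) | z in Z^n } *)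
Definition in_Gamma (R : realFieldType) (n : nat) (g : aff R n) : Prop :=
  exists (z : 'cV[int]_n) (s : bool),
    g = (map_mx (fun k : int => k%:~R) z, (if s then - 1%:M else 1%:M)).

Definition reid_rel (R : realFieldType) (n : nat) (phi : aff R n -> aff R n)
  (g g' : aff R n) : Prop :=
  exists2 h, in_Gamma h & g = aff_mul (aff_mul h g') (aff_inv (phi h)).

(* R(phi) as an element of N u {oo}: None = infinity.
   reid_number phi (Some k): there are exactly k twisted conjugacy classes,
   i.e. k pairwise inequivalent elements of Gamma meeting every class;
   reid_number phi None: there are infinitely many classes, i.e. for every k
   there are k pairwise inequivalent elements of Gamma. *)
Definition reid_number (R : realFieldType) (n : nat) (phi : aff R n -> aff R n)
  (r : option nat) : Prop :=
  match r with
  | Some k =>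
      exists reps : 'I_k -> aff R n,
        [/\ forall i, in_Gamma (reps i),
            forall i j, reid_rel phi (reps i) (reps j) -> i = j
          & forall g, in_Gamma g -> exists i, reid_rel phi g (reps i)]
  | None =>
      forall k, exists reps : 'I_k -> aff R n,
        (forall i, in_Gamma (reps i)) /\
        (forall i j, reid_rel phi (reps i) (reps j) -> i = j)
  end.

Definition abs_inf (x : int) : option nat :=
  if x == 0 then None else Some `|x|%N.

Definition oadd (a b : option nat) : option nat :=
  match a, b with Some x, Some y => Some (x + y)%N | _, _ => None end.

Definition holF (n : nat) : seq 'M[int]_n := [:: 1%:M; - 1%:M].

Definition hol_sum (n : nat) (D : 'M[int]_n) : option nat :=
  foldr oadd (Some 0%N) [seq abs_inf (\det (1%:M - A *m D)) | A <- holF n].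

Definition O_count (n : nat) (B : 'M[int]_n) (b : 'cV[int]_n) : nat :=
  #|[set x : 'cV['F_2]_n |
       map_mx (fun k : int => (k%:~R : 'F_2)) B *m x
       == map_mx (fun k : int => (k%:~R : 'F_2)) b]|.

Definition rhs_value (s : option nat) (o : nat) : option rat :=
  match s with Some m => Some ((m%:R : rat) / 2 + (o%:R : rat)) | None => None end.

Definition reid_value (R : realFieldType) (n : nat) (phi : aff R n -> aff R n)
  (v : option rat) : Prop :=
  match v with
  | Some q => exists k : nat, (k%:R : rat) = q /\ reid_number phi (Some k)
  | None => reid_number phi None
  end.

(* Main.v *)
Require Import Defs.
From HB Require Import structures.
From mathcomp Require Import all_boot all_order all_algebra zify ring lra.
Set Implicit Arguments. Unset Strict Implicit. Unset Printing Implicit Defensive.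
Import Order.TTheory GRing.Theory Num.Theory.
Local Open Scope ring_scope.


Lemma orbit_count (T : finType) (f : T -> T) (fK : involutive f) :
  exists k (q : 'I_k -> T),
    [/\ (forall i j, q i = q j \/ q i = f (q j) -> i = j),
        (forall t, exists i, t = q i \/ t = f (q i)) &
        (k.*2 = #|T| + #|[set t | f t == t]|)%N].
Proof.
pose Q := [set t | (enum_rank t <= enum_rank (f t))%N].
exists #|Q|, (fun i => @enum_val T (mem Q) i); split.
- move=> i j [/enum_val_inj //|E].
  have Hi := enum_valP i; have Hj := enum_valP j.
  rewrite !inE in Hi Hj.
  rewrite E fK -E in Hi; rewrite -E in Hj.
  have : enum_rank (enum_val i : T) = enum_rank (enum_val j : T).
    by apply: val_inj; apply/eqP; rewrite eqn_leq Hi Hj.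
  by move/enum_rank_inj=> /enum_val_inj.
- move=> t; case: (boolP (t \in Q)) => tQ.
    by exists (enum_rank_in tQ t); left; rewrite enum_rankK_in.
  have ftQ : f t \in Q.
    by move: tQ; rewrite !inE fK => /negbTE H; case: leqP H => // /ltnW.
  by exists (enum_rank_in ftQ (f t)); right; rewrite enum_rankK_in // fK.
pose Fx := [set t | f t == t].
pose Qs := [set t | (enum_rank t < enum_rank (f t))%N].
have eF t : (f t == t) = (enum_rank (f t) == enum_rank t).
  by rewrite (inj_eq enum_rank_inj).
have h1 : #|Q| = (#|Qs| + #|Fx|)%N.
  rewrite -(cardsID Fx Q) addnC; congr (_ + _)%N; apply: eq_card => u;
  rewrite !inE eF -val_eqE /=; lia.
have h2 : #|~: Q| = #|Qs|.
  rewrite -(card_imset _ (inv_inj fK)); apply: eq_card => t.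
  apply/idP/idP.
    by case/imsetP=> u; rewrite !inE => H ->; rewrite fK ltnNge.
  rewrite !inE => H; apply/imsetP; exists (f t); last by rewrite fK.
  by rewrite !inE (fK t) -ltnNge.
have h3 := cardsC Q.
rewrite -h3 -/Fx. lia.
Qed.

Definition RelAC n (A : 'M[int]_n) (c x y : 'cV[int]_n) : Prop :=
  exists z, x = y + A *m z \/ x = c - y + A *m z.

Definition dgm (R : pzRingType) n (a : 'I_n -> R) : 'M[R]_n :=
  \matrix_(i, j) (a i *+ (i == j :> nat)).

Lemma dgmE (R : pzRingType) n (a : 'I_n -> R) (z : 'cV[R]_n) i :
  (dgm a *m z) i 0 = a i * z i 0.
Proof.
rewrite mxE (bigD1 i) //= big1 ?addr0; first by rewrite mxE eqxx mulr1n.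
move=> j ji; rewrite mxE; case: eqP => [/val_inj E|_]; last by rewrite mulr0n mul0r.
by rewrite E eqxx in ji.
Qed.

Lemma mxDE (R : zmodType) m n (u v : 'M[R]_(m,n)) i j : (u + v) i j = u i j + v i j.
Proof. by rewrite mxE. Qed.
Lemma mxNE (R : zmodType) m n (u : 'M[R]_(m,n)) i j : (- u) i j = - u i j.
Proof. by rewrite mxE. Qed.
Lemma mxBE (R : zmodType) m n (u v : 'M[R]_(m,n)) i j : (u - v) i j = u i j - v i j.
Proof. by rewrite mxE mxNE. Qed.

Lemma colE (R : Type) n (f : 'I_n -> R) i : (\col_(i < n) f i) i 0 = f i.
Proof. by rewrite mxE. Qed.

Lemma dvd_of (d m q : int) : m = q * d -> (d %| m)%Z.
Proof. by move=> h; apply/dvdzP; exists q. Qed.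

Lemma red_lt (a x : int) : a != 0 -> (`|(x %% a)%Z|%N < `|a|%N)%N.
Proof.
move=> a0; have h1 := modz_ge0 x a0; have h2 := ltz_mod x a0.
by rewrite -ltz_nat gez0_abs // abszE.
Qed.

Definition Tdg n (a : 'I_n -> int) := {dffun forall i : 'I_n, 'I_(`|a i|%N)}.

Definition red n (a : 'I_n -> int) (anz : forall i, a i != 0) (x : 'cV[int]_n) : Tdg a :=
  @finfun _ (fun i => 'I_(`|a i|%N)) (fun i => Ordinal (red_lt (x i 0) (anz i))).

Definition emb n (a : 'I_n -> int) (t : Tdg a) : 'cV[int]_n := \col_i ((t i : nat)%:Z).

Lemma red_emb n (a : 'I_n -> int) (anz : forall i, a i != 0) (t : Tdg a) : red (anz : forall i, a i != 0) (emb t) = t.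
Proof.
apply/ffunP => i; apply: val_inj; rewrite ffunE /= mxE.
rewrite -modz_abs modz_small //; apply/andP; split => //.
by rewrite ltz_nat ltn_ord.
Qed.

Lemma red_eq n (a : 'I_n -> int) (anz : forall i, a i != 0) (x y : 'cV[int]_n) :
  red anz x = red anz y <-> forall i, (a i %| (x i 0 - y i 0)%R)%Z.
Proof.
split.
  move=> E i; have := congr1 (fun f : Tdg a => (f i : nat)) E; rewrite !ffunE /= => h.
  have h' : ((x i 0)%R %% a i)%Z = ((y i 0)%R %% a i)%Z.
    by rewrite -(gez0_abs (modz_ge0 _ (anz i))) h gez0_abs // modz_ge0.
  by rewrite -eqz_mod_dvd; apply/eqP.
move=> H; apply/ffunP => i; apply: val_inj; rewrite !ffunE /=.
by move: (H i); rewrite -eqz_mod_dvd => /eqP ->.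
Qed.

Lemma emb_red n (a : 'I_n -> int) (anz : forall i, a i != 0) (x : 'cV[int]_n) i :
  (a i %| (emb (red anz x) i 0 - x i 0)%R)%Z.
Proof.
rewrite mxE ffunE /= gez0_abs ?modz_ge0 //.
by rewrite -eqz_mod_dvd modz_mod.
Qed.

Lemma relD n (a : 'I_n -> int) (anz : forall i, a i != 0) (c x y : 'cV[int]_n) :
  RelAC (dgm a) c x y <-> red anz x = red anz y \/ red anz x = red (anz : forall i, a i != 0) (c - y).
Proof.
split.
  case=> z [E|E]; [left|right]; apply/red_eq => i; rewrite E ?mxDE ?mxBE dgmE;
  apply: (@dvd_of _ _ (z i 0)); ring.
case=> /red_eq H;
  [exists (\col_i (((x i 0 - y i 0)%R %/ a i)%Z)); left
  |exists (\col_i (((x i 0 - (c - y) i 0)%R %/ a i)%Z)); right];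
  apply/matrixP => i j; rewrite (ord1 j) mxDE dgmE colE mulrC (divzK (H i));
  by rewrite addrC subrK.
Qed.

Definition sgm n (a : 'I_n -> int) (anz : forall i, a i != 0) (c : 'cV[int]_n)
  (t : Tdg a) : Tdg a := red anz (c - emb t).

Lemma sgmK n (a : 'I_n -> int) (anz : forall i, a i != 0) (c : 'cV[int]_n) :
  involutive (sgm anz c).
Proof.
move=> t; rewrite /sgm -[RHS](red_emb anz); apply/red_eq => i.
have := emb_red anz (c - emb t) i.
rewrite !mxBE => /dvdzP [q hq]; apply: (@dvd_of _ _ (- q)).
rewrite mulNr -hq; ring.
Qed.

Lemma fixP n (a : 'I_n -> int) (anz : forall i, a i != 0) (c : 'cV[int]_n) t :
  sgm anz c t = t <-> forall i, (a i %| (c i 0 - 2 * (t i : nat)%:Z)%R)%Z.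
Proof.
rewrite /sgm; split => [E i | H].
  rewrite -{2}(red_emb anz t) in E.
  have := proj1 (red_eq anz _ _) E i.
  rewrite mxBE /emb !colE => /dvdzP [q hq]; apply: (@dvd_of _ _ q); rewrite -hq; ring.
rewrite -{2}(red_emb anz t); apply/red_eq => i; rewrite mxBE /emb !colE.
move: (H i) => /dvdzP [q hq]; apply: (@dvd_of _ _ q); rewrite -hq; ring.
Qed.

Lemma F2two : (2%:R : 'F_2) = 0.
Proof. exact: (pcharf0 (pchar_Fp (isT : prime 2))). Qed.

Lemma F2_intr0 (k : int) : ((k%:~R : 'F_2) == 0) = (2 %| k)%Z.
Proof.
rewrite {1}(divz_eq k 2) rmorphD rmorphM /=.
rewrite (_ : (2%:~R : 'F_2) = 0) ?mulr0 ?add0r; last by rewrite -pmulrn F2two.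
have e : (2 %| k)%Z = ((k %% 2)%Z == 0) by apply/dvdz_mod0P/eqP.
have h1 := modz_ge0 k (isT : (2 : int) != 0).
have h2 := ltz_pmod k (isT : (0 : int) < 2).
have : ((k %% 2)%Z = 0) \/ ((k %% 2)%Z = 1) by lia.
by rewrite e; case=> ->; rewrite ?rmorph0 ?rmorph1 ?oner_eq0 ?eqxx.
Qed.

Lemma F2_eq (u v : int) : ((u%:~R : 'F_2) == v%:~R) = (2 %| (u - v)%R)%Z.
Proof. by rewrite -subr_eq0 -rmorphB F2_intr0. Qed.

Lemma F2_nat (y : 'F_2) : (((y : nat)%:Z)%:~R : 'F_2) = y.
Proof. by case: y => [[|[|m]] ?] //; apply/val_inj. Qed.

Notation fi := (fun k : int => (k%:~R : 'F_2)).

Lemma osolP n (a : 'I_n -> int) (c : 'cV[int]_n) (y : 'cV['F_2]_n) :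
  (map_mx fi (dgm a) *m y == map_mx fi c) =
  [forall i, ((a i)%:~R * y i 0 == (c i 0)%:~R :> 'F_2)].
Proof.
have -> : map_mx fi (dgm a) = dgm (fun i => fi (a i)).
  apply/matrixP => i j; rewrite !mxE; case: (_ == _ :> nat) => /=;
  by rewrite ?mulr1n ?mulr0n ?rmorph0.
apply/eqP/forallP => [E i | H].
  by have := congr1 (fun M : 'cV_n => M i 0) E; rewrite dgmE mxE /= => ->.
apply/matrixP => i j; rewrite (ord1 j) dgmE mxE; exact: (eqP (H i)).
Qed.

Lemma fix_count n (a : 'I_n -> int) (anz : forall i, a i != 0) (c : 'cV[int]_n) :
  #|[set t : Tdg a | sgm anz c t == t]| = O_count (dgm a) c.
Proof.
pose gF (t : Tdg a) : 'cV['F_2]_n :=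
  \col_i ((((2 * (t i : nat)%:Z - c i 0)%R %/ a i)%Z)%:~R).
have dq t i : sgm anz c t = t ->
    (((2 * (t i : nat)%:Z - c i 0)%R %/ a i)%Z * a i = 2 * (t i : nat)%:Z - c i 0).
  move=> /fixP H; apply: divzK; move: (H i) => /dvdzP [q hq].
  apply: (@dvd_of _ _ (- q)); rewrite mulNr -hq; ring.
rewrite /O_count -(@card_in_imset _ _ gF).
  apply: eq_card => y; rewrite inE osolP; apply/imsetP/forallP.
    case=> t; rewrite inE => /eqP tF -> i.
    rewrite colE -rmorphM /= mulrC (dq t i tF) F2_eq.
    by apply: (@dvd_of _ _ ((t i : nat)%:Z - c i 0)); ring.
  move=> H.
  pose yh i := ((y i 0 : nat)%:Z).
  have H2 i : (2 %| (a i * yh i + c i 0)%R)%Z.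
    move: (H i); rewrite -[y i 0]F2_nat -rmorphM /= F2_eq => /dvdzP [q hq].
    apply: (@dvd_of _ _ (q + c i 0)); rewrite mulrDl -hq /yh; ring.
  pose w := \col_i (((a i * yh i + c i 0)%R %/ 2)%Z).
  have hw i : w i 0 * 2 = a i * yh i + c i 0 by rewrite colE divzK.
  have ht i : exists m, (red anz w i : nat)%:Z = w i 0 + m * a i.
    have := emb_red anz w i; rewrite colE => /dvdzP [m hm]; exists m.
    by rewrite -hm; ring.
  have tF : sgm anz c (red anz w) = red anz w.
    apply/fixP => i; have [m hm] := ht i; rewrite hm.
    apply: (@dvd_of _ _ (- yh i - 2 * m)).
    have := hw i; lia.
  exists (red anz w); first by rewrite inE tF.
  apply/matrixP => i j; rewrite (ord1 j) colE.
  have [m hm] := ht i.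
  have e : (2 * (red anz w i : nat)%:Z - c i 0) = (yh i + 2 * m) * a i.
    rewrite hm; have := hw i; lia.
  rewrite e mulzK // -[y i 0]F2_nat; apply/eqP; rewrite F2_eq /yh.
  by apply: (@dvd_of _ _ (- m)); ring.
move=> t1 t2; rewrite !inE => /eqP F1 /eqP F2 E.
rewrite -(red_emb anz t1) -(red_emb anz t2); apply/red_eq => i.
have := congr1 (fun M : 'cV_n => M i 0) E; rewrite /gF /= !colE => /eqP.
rewrite F2_eq => /dvdzP [k hk].
have h1 := dq t1 i F1; have h2 := dq t2 i F2.
apply: (@dvd_of _ _ k).
set q1 := (_ %/ a i)%Z in h1 hk; set q2 := (_ %/ a i)%Z in h2 hk.
have : q1 * a i - q2 * a i = k * 2 * a i by rewrite -mulrBl hk.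
rewrite h1 h2; lia.
Qed.

Lemma diag_count n (a : 'I_n -> int) (anz : forall i, a i != 0) (c : 'cV[int]_n) :
  exists k (q : 'I_k -> 'cV[int]_n),
    [/\ (forall i j, RelAC (dgm a) c (q i) (q j) -> i = j),
        (forall x, exists i, RelAC (dgm a) c x (q i)) &
        (k.*2 = (\prod_i `|a i|%N) + O_count (dgm a) c)%N].
Proof.
have [k [q0 [H1 H2 H3]]] := orbit_count (sgmK anz c).
exists k, (fun i => emb (q0 i)); split.
- move=> i j /(relD anz); rewrite !red_emb => H; exact: H1.
- move=> x; have [i Hi] := H2 (red anz x); exists i; apply/(relD anz).
  by rewrite red_emb.
- rewrite H3 fix_count card_dep_ffun foldrE big_map big_enum /=; congr (_ + _)%N.
  by apply: eq_bigr => i _; rewrite card_ord.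
Qed.

Lemma rel_transfer n (L B Rm : 'M[int]_n) (c x y : 'cV[int]_n) :
  L \in unitmx -> Rm \in unitmx ->
  RelAC (L *m B *m Rm) c x y <->
  RelAC B (invmx L *m c) (invmx L *m x) (invmx L *m y).
Proof.
move=> uL uR; split.
  case=> z [E|E]; exists (Rm *m z); [left|right];
  by rewrite E ?mulmxDr ?mulmxN !mulmxA mulVmx // mul1mx.
case=> z [E|E]; exists (invmx Rm *m z); [left|right];
  (have e : L *m B *m Rm *m (invmx Rm *m z) = L *m (B *m z)
     by rewrite -!mulmxA mulKVmx);
  by rewrite e -[x](mulKVmx uL) E ?mulmxDr ?mulmxN !mulKVmx.
Qed.

Lemma fiM m n p (A : 'M[int]_(m,n)) (B : 'M[int]_(n,p)) :
  map_mx fi (A *m B) = map_mx fi A *m map_mx fi B.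
Proof. by rewrite map_mxM. Qed.
Lemma fi1 n : map_mx fi (1%:M : 'M[int]_n) = 1%:M.
Proof. by rewrite map_mx1. Qed.

Lemma O_transfer n (L B Rm : 'M[int]_n) (c : 'cV[int]_n) :
  L \in unitmx -> Rm \in unitmx ->
  O_count (L *m B *m Rm) c = O_count B (invmx L *m c).
Proof.
move=> uL uR; rewrite /O_count.
have hR1 : map_mx fi (invmx Rm) *m map_mx fi Rm = 1%:M by rewrite -fiM mulVmx // fi1.
have hR2 : map_mx fi Rm *m map_mx fi (invmx Rm) = 1%:M by rewrite -fiM mulmxV // fi1.
have hL1 : map_mx fi (invmx L) *m map_mx fi L = 1%:M by rewrite -fiM mulVmx // fi1.
have hL2 : map_mx fi L *m map_mx fi (invmx L) = 1%:M by rewrite -fiM mulmxV // fi1.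
have ginj : injective (fun y : 'cV['F_2]_n => map_mx fi Rm *m y).
  by move=> y1 y2 /(congr1 (mulmx (map_mx fi (invmx Rm)))); rewrite !mulmxA hR1 !mul1mx.
rewrite -(card_imset _ ginj); apply: eq_card => y; rewrite inE.
apply/imsetP/idP.
  case=> y0; rewrite inE !fiM => /eqP E ->.
  by rewrite -E !mulmxA hL1 mul1mx.
rewrite !fiM => /eqP E; exists (map_mx fi (invmx Rm) *m y).
  by rewrite inE ?fiM -!mulmxA (mulmxA (map_mx fi Rm)) hR2 mul1mx E mulmxA hL2 mul1mx.
by rewrite mulmxA hR2 mul1mx.
Qed.

Lemma det_dgm n (a : 'I_n -> int) : \det (dgm a) = \prod_i a i.
Proof.
have -> : dgm a = diag_mx (\row_i a i) by apply/matrixP => i j; rewrite !mxE.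
by rewrite det_diag; apply: eq_bigr => i _; rewrite mxE.
Qed.

Lemma unit_abs (u : int) : u \is a GRing.unit -> `|u|%N = 1%N.
Proof. by case/orP => /eqP ->. Qed.

Lemma fin_count n (A : 'M[int]_n) (c : 'cV[int]_n) : \det A != 0 ->
  exists k (q : 'I_k -> 'cV[int]_n),
    [/\ (forall i j, RelAC A c (q i) (q j) -> i = j),
        (forall x, exists i, RelAC A c x (q i)) &
        (k.*2 = `|\det A|%N + O_count A c)%N].
Proof.
move=> dA.
have [L uL [Rm uR [ds _ EA]]] := int_Smith_normal_form A.
pose a := fun i : 'I_n => ds`_i.
have EB : A = L *m dgm a *m Rm by rewrite EA.
have detA : \det A = \det L * (\prod_i a i) * \det Rm by rewrite EB !det_mulmx det_dgm.
have anz : forall i, a i != 0.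
  move=> i; apply/negP => /eqP ai0; move: dA.
  by rewrite detA (bigD1 i) //= ai0 mul0r mulr0 mul0r eqxx.
have [k [q [H1 H2 H3]]] := diag_count anz (invmx L *m c).
exists k, (fun i => L *m q i); split.
- move=> i j; rewrite EB rel_transfer // !mulKmx //; exact: H1.
- move=> x; have [i Hi] := H2 (invmx L *m x); exists i.
  by rewrite EB rel_transfer // mulKmx.
- rewrite H3 EB O_transfer //; congr (_ + _)%N.
  rewrite -EB detA !abszM.
  have uL' : \det L \is a GRing.unit by rewrite -unitmxE.
  have uR' : \det Rm \is a GRing.unit by rewrite -unitmxE.
  rewrite (unit_abs uL') (unit_abs uR') mul1n muln1.
  apply/eqP; rewrite -eqz_nat -!natz natr_prod.
  under eq_bigr => i _ do rewrite natz abszE.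
  by rewrite natz abszE normr_prod.
Qed.

Lemma inf_count n (A : 'M[int]_n) (c : 'cV[int]_n) : \det A = 0 ->
  forall k, exists q : 'I_k -> 'cV[int]_n,
    forall i j, RelAC A c (q i) (q j) -> i = j.
Proof.
move=> dA k.
have [L uL [Rm uR [ds _ EA]]] := int_Smith_normal_form A.
pose a := fun i : 'I_n => ds`_i.
have EB : A = L *m dgm a *m Rm by rewrite EA.
have [i0 ai0] : exists i0, a i0 = 0.
  have nL : \det L != 0 by apply/eqP => h; move: uL; rewrite unitmxE h unitr0.
  have nR : \det Rm != 0 by apply/eqP => h; move: uR; rewrite unitmxE h unitr0.
  have : (\det L * \prod_i a i) * \det Rm == 0.
    by rewrite -det_dgm -!det_mulmx -EB dA.
  rewrite !mulf_eq0 (negbTE nL) (negbTE nR) /= orbF.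
  by rewrite prodf_seq_eq0 => /hasP [i _ /eqP]; exists i.
pose c' := invmx L *m c.
pose C := (`|(c' i0 0)%R|%N).+1.
pose e (j : 'I_k) : 'cV[int]_n := \col_l (if l == i0 then (C + j)%:Z else 0).
exists (fun j => L *m e j) => i j; rewrite EB rel_transfer // !mulKmx //.
case=> z [] /(congr1 (fun M : 'cV_n => M i0 0));
  rewrite ?mxDE ?mxNE dgmE ai0 mul0r addr0 !colE eqxx => h.
  by apply: ord_inj; lia.
have hc : c' i0 0 <= (`|(c' i0 0)%R|%N)%:Z by rewrite abszE ler_norm.
rewrite /C in h.
rewrite -/c' in h; exfalso; move: h hc; move: (`|(c' i0 0)%R|%N) => u; move: (c' i0 0) => v; lia.
Qed.


Definition emb' (R : realFieldType) n (x : 'cV[int]_n) (s : bool) : aff R n :=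
  (map_mx (fun k : int => (k%:~R : R)) x, if s then - 1%:M else 1%:M).

Lemma invN1mx (R : realFieldType) n : invmx (- 1%:M : 'M[R]_n) = - 1%:M.
Proof.
have -> : (- 1%:M : 'M[R]_n) = (-1)%:M by apply/matrixP=> i j; rewrite !mxE mulNrn.
by rewrite invmx_scalar invrN1.
Qed.

Lemma iota_inj (R : realFieldType) n (x y : 'cV[int]_n) :
  map_mx (fun k : int => (k%:~R : R)) x = map_mx (fun k : int => (k%:~R : R)) y -> x = y.
Proof.
move=> h; apply/matrixP => i j; apply: (@intr_inj R).
by have := congr1 (fun M : 'cV[R]_n => M i j) h; rewrite !mxE.
Qed.

Lemma sg_inj (R : realFieldType) n (hn : (0 < n)%N) (s s' : bool) :
  ((if s then - 1%:M else 1%:M) : 'M[R]_n) = (if s' then - 1%:M else 1%:M) -> s = s'.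
Proof.
pose i0 := Ordinal hn.
have H : (- 1%:M : 'M[R]_n) <> 1%:M.
  move=> /(congr1 (fun M : 'M[R]_n => M i0 i0)); rewrite !mxE eqxx /= mulr1n => h; lra.
by case: s; case: s' => // /esym.
Qed.

Lemma uD (R : realFieldType) n (D : 'M[R]_n) (Dz : 'M[int]_n)
  (hD : D = map_mx (fun k : int => k%:~R) Dz) (hDz : Dz \in unitmx) : D \in unitmx.
Proof.
rewrite hD unitmxE det_map_mx.
by move: hDz; rewrite unitmxE => /orP [] /eqP ->; rewrite ?rmorphN rmorph1 ?unitrN unitr1.
Qed.

Lemma phi_calc (R : realFieldType) n (d : 'cV[R]_n) (D : 'M[R]_n)
  (b : 'cV[int]_n) (Dz : 'M[int]_n)
  (hb : (2 : R) *: d = map_mx (fun k : int => k%:~R) b)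
  (hD : D = map_mx (fun k : int => k%:~R) Dz) (hDz : Dz \in unitmx)
  (z : 'cV[int]_n) (dl : bool) :
  xi (d, D) (emb' R z dl) =
  emb' R (Dz *m z + (if dl then b else 0)) dl.
Proof.
have uD := uD hD hDz.
rewrite /xi /aff_mul /aff_inv /emb' /=; congr (_, _); last first.
  by case: dl; rewrite ?mulmxN ?mulNmx mulmx1 mulmxV.
rewrite map_mxD map_mxM -hD.
case: dl; rewrite ?mulmxN ?mulNmx mulmx1 ?opprK mulmxA mulmxV // mul1mx.
  rewrite -hb; apply/matrixP => i j; rewrite !mxE; ring.
rewrite map_mx0; apply/matrixP => i j; rewrite !mxE; ring.
Qed.

Lemma mul_calc (R : realFieldType) n (z x' w : 'cV[int]_n) (dl s' : bool) :
  aff_mul (aff_mul (emb' R z dl) (emb' R x' s')) (aff_inv (emb' R w dl)) =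
  emb' R (z + (if dl then - x' else x') - (if s' then - w else w)) s'.
Proof.
rewrite /aff_mul /aff_inv /emb' /=; congr (_, _); last first.
  by case: dl; case: s'; rewrite ?invN1mx ?invmx1 ?mulmxN ?mulNmx ?mulmx1 ?mul1mx ?opprK.
rewrite !map_mxD !map_mxN.
case: dl; case: s'; rewrite ?invN1mx ?invmx1 ?mulmxN ?mulNmx ?mulmx1 ?mul1mx ?opprK ?map_mxN;
  apply/matrixP => i j; rewrite !mxE; ring.
Qed.

Lemma reid_iff (R : realFieldType) n (hn : (0 < n)%N) (d : 'cV[R]_n) (D : 'M[R]_n)
  (b : 'cV[int]_n) (Dz : 'M[int]_n)
  (hb : (2 : R) *: d = map_mx (fun k : int => k%:~R) b)
  (hD : D = map_mx (fun k : int => k%:~R) Dz) (hDz : Dz \in unitmx)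
  (x x' : 'cV[int]_n) (s s' : bool) :
  reid_rel (xi (d, D)) (emb' R x s) (emb' R x' s') <->
  s = s' /\ RelAC (if s then 1%:M + Dz else 1%:M - Dz) (if s then b else - b) x x'.
Proof.
split.
  case=> h [z [dl ->]] E.
  change (emb' R x s = aff_mul (aff_mul (emb' R z dl) (emb' R x' s'))
            (aff_inv (xi (d, D) (emb' R z dl)))) in E.
  rewrite (phi_calc hb hD hDz) mul_calc in E.
  case: E => /iota_inj Ex /(sg_inj hn) Es; subst s'; split => //.
  exists z; case: dl Ex => Ex; [right|left]; rewrite {}Ex; case: s => /=;
  rewrite ?mulmxDl ?mulmxBl ?mulNmx ?mul1mx; apply/matrixP => i j; rewrite !mxE; ring.
case=> <- [w [E|E]]; [exists (emb' R w false) | exists (emb' R w true)];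
  try (by exists w, false); try (by exists w, true);
  rewrite (phi_calc hb hD hDz) mul_calc; congr (emb' R _ s); rewrite {}E; case: s => /=;
  rewrite ?mulmxDl ?mulmxBl ?mulNmx ?mul1mx; apply/matrixP => i j; rewrite !mxE; ring.
Qed.


Lemma F2N (x : 'F_2) : - x = x.
Proof. by case: x => [[|[|m]] ?] //; apply/val_inj. Qed.

Lemma O_eq1 n (A : 'M[int]_n) (b : 'cV[int]_n) : O_count A (- b) = O_count A b.
Proof.
rewrite /O_count; apply: eq_card => y; rewrite !inE.
have -> : map_mx fi (- b) = map_mx fi b.
  by apply/matrixP => i j; rewrite !mxE rmorphN /= F2N.
by [].
Qed.

Lemma O_eq2 n (Dz : 'M[int]_n) (b : 'cV[int]_n) :
  O_count (1%:M + Dz) b = O_count (1%:M - Dz) b.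
Proof.
rewrite /O_count; apply: eq_card => y; rewrite !inE.
have -> : map_mx fi (1%:M + Dz) = map_mx fi (1%:M - Dz).
  by apply/matrixP => i j; rewrite !mxE !rmorphD rmorphN /= F2N.
by [].
Qed.

Unset Implicit Arguments.

Theorem proposition5p11 (R : realFieldType) (n : nat) (hn : (2 <= n)%N)
  (d : 'cV[R]_n) (D : 'M[R]_n)
  (b : 'cV[int]_n) (Dz : 'M[int]_n)
  (hb : (2 : R) *: d = map_mx (fun k : int => k%:~R) b)   (* d in (1/2 Z)^n, 2d = b *)
  (hD : D = map_mx (fun k : int => k%:~R) Dz)               (* D integral ... *)
  (hDz : Dz \in unitmx) :                                   (* ... and in GL_n(Z) *)
  reid_value (xi (d, D))
    (rhs_value (hol_sum Dz) (O_count (1%:M - Dz) b)).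
Proof.
have hn0 : (0 < n)%N by apply: leq_trans hn.
pose AA (s : bool) := if s then 1%:M + Dz else 1%:M - Dz.
pose cc (s : bool) := if s then b else - b.
have RI := reid_iff hn0 hb hD hDz.
have hs : hol_sum Dz = oadd (abs_inf (\det (AA false)))
                         (oadd (abs_inf (\det (AA true))) (Some 0%N)).
  by rewrite /hol_sum /= mul1mx mulNmx mul1mx opprK.
rewrite hs.
have Hinf : forall s, \det (AA s) = 0 -> reid_number (xi (d, D)) None.
  move=> s ds k; have [q Hq] := inf_count (cc s) ds k.
  exists (fun i => emb' R (q i) s); split.
    by move=> i; exists (q i), s.
  by move=> i j /RI [_ H]; apply: Hq; case: s ds H.
case: (eqVneq (\det (AA false)) 0) => [d0|d0].
  by rewrite /abs_inf d0 eqxx /=; exact: (Hinf false).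
case: (eqVneq (\det (AA true)) 0) => [d1|d1].
  by rewrite /abs_inf d1 eqxx /= (negbTE d0) /=; exact: (Hinf true).
rewrite /abs_inf (negbTE d0) (negbTE d1) /=.
have [k0 [q0 [P0 C0 K0]]] := fin_count (cc false) d0.
have [k1 [q1 [P1 C1 K1]]] := fin_count (cc true) d1.
rewrite /cc O_eq1 in K0; rewrite /cc O_eq2 in K1.
exists (k0 + k1)%N; split.
  set O := O_count _ _ in K0 K1 *.
  have e : ((k0 + k1).*2 = `|\det (AA false)| + (`|\det (AA true)| + 0) + O.*2)%N by lia.
  have := congr1 (fun m : nat => (m%:R : rat)) e.
  rewrite -!muln2 !natrD !natrM => h.
  rewrite ?natrD; lra.
exists (fun i => match split i with
                 | inl a => emb' R (q0 a) false
                 | inr a => emb' R (q1 a) true end); split.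
- by move=> i; case: (split i) => a; [exists (q0 a), false | exists (q1 a), true].
- move=> i j; rewrite -[i]splitK -[j]splitK.
  case: (split i) => a; case: (split j) => a'; rewrite !unsplitK => /RI [//= _ H].
    by rewrite (P0 _ _ H).
  by rewrite (P1 _ _ H).
- move=> g [z [s ->]]; case: s.
    have [a Ha] := C1 z; exists (unsplit (inr a)); rewrite unsplitK.
    exact/(RI z (q1 a) true true).
  have [a Ha] := C0 z; exists (unsplit (inl a)); rewrite unsplitK.
  exact/(RI z (q0 a) false false).
Qed.
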